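(* Let $N=\begin{pmatrix}0&1&0\\0&0&1\\0&0&0\end{pmatrix}$, $\xi=(x,y,z)^T$, $\beta=2zx-y^2$, and $d\ge1$. The space $\ker(\mathrm{ad}_{N^*})\cap U^3_d$ equals $\{\theta\,\xi:\ \theta=\theta(x,\beta)\in P^3_{d-1}\}$, i.e. the vector fields $\theta\xi$ with $\theta$ a homogeneous degree-$(d-1)$ polynomial in $\xi$ that is a polynomial in $x$ and $\beta$. This space has dimension $\lceil d/2\rceil$.
   Context: $P^3_k$ is the space of real homogeneous polynomials of degree $k$ on $\mathbb{R}^3$; $U^3_d=\{\theta(\xi)\xi:\theta\in P^3_{d-1}\}$. $\mathrm{ad}_A h(\xi)=Dh(\xi)A\xi-Ah(\xi)$, $N^*=N^T$; $\ker\mathrm{ad}_{N^*}$ is the orthogonal complement of $\mathrm{rng}\,\mathrm{ad}_N$ with respect to the inner product $\langle p,q\rangle=\sum_i p_i(\partial_\xi)q_i(\xi)|_{\xi=0}$. *)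

(* Defs.v *)
From HB Require Import structures.
From mathcomp Require Import all_boot all_order all_algebra.
From mathcomp Require Import reals.
From mathcomp Require Import mpoly.
Set Implicit Arguments. Unset Strict Implicit. Unset Printing Implicit Defensive.
Import Order.TTheory GRing.Theory Num.Theory.
Local Open Scope ring_scope.

(* Coordinates: xi = (x,y,z) = ('X_0,'X_1,'X_2). *)
Definition vf (R : realType) := {ffun 'I_3 -> {mpoly R[3]}}.

Definition xi (R : realType) : vf R := [ffun i => 'X_i].

(* the nilpotent matrix N (ones on the superdiagonal) and N^* = N^T *)
Definition Nmat (R : realType) : 'M[R]_3 :=
  \matrix_(i, j) (if nat_of_ord j == (nat_of_ord i).+1 then 1 else 0).

Definition ad (R : realType) (A : 'M[R]_3) (h : vf R) : vf R :=
  [ffun i => \sum_(j < 3) mderiv j (h i) * (\sum_(k < 3) (A j k) *: 'X_k)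
             - \sum_(j < 3) (A i j) *: h j].

Definition U3 (R : realType) (d : nat) (h : vf R) : Prop :=
  exists theta : {mpoly R[3]},
    theta \is (d.-1).-homog /\ h = [ffun i => theta * 'X_i].

Definition ker_adNstar (R : realType) (h : vf R) : Prop :=
  ad (Nmat R)^T h = 0.

Definition beta (R : realType) : {mpoly R[3]} :=
  2%:R * ('X_2 * 'X_0) - 'X_1 ^+ 2.

Definition poly_in_x_beta (R : realType) (theta : {mpoly R[3]}) : Prop :=
  exists q : {mpoly R[2]}, theta = q \mPo [tuple ('X_0 : {mpoly R[3]}); beta R].

(* Main.v *)
Require Import Defs.
From HB Require Import structures.
From mathcomp Require Import all_boot all_order all_algebra.
From mathcomp Require Import reals.
From mathcomp Require Import mpoly.
From mathcomp Require Import ring zify.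
Import Order.TTheory GRing.Theory Num.Theory.
Local Open Scope ring_scope.

Section S.
Variable R : realType.
Implicit Types p q : {mpoly R[3]}.

Local Notation I0 := (0%R : 'I_3).
Local Notation I1 := (1%R : 'I_3).
Local Notation I2 := (2%R : 'I_3).
Definition mn (a b c : nat) : 'X_{1..3} := [multinom nth 0%N [:: a; b; c] i | i < 3].

Ltac mnm_tac := apply/mnmP; case => [[|[|[|]]] ?];
  rewrite ?(mnmDE, mnmBE, mnm1E, mnmE, mulmnE) //=; try lia.

Lemma mn_eta (m : 'X_{1..3}) : m = mn (m I0) (m I1) (m I2).
Proof.
apply/mnmP=> j; rewrite mnmE; case: j => [[|[|[|]]] Hj] //=;
  by congr (m _); apply/val_inj.
Qed.

Lemma mn0 a b c : mn a b c I0 = a. Proof. by rewrite mnmE. Qed.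
Lemma mn1 a b c : mn a b c I1 = b. Proof. by rewrite mnmE. Qed.
Lemma mn2 a b c : mn a b c I2 = c. Proof. by rewrite mnmE. Qed.

Lemma mn_sh1 a b c : (mn a b c - U_(I0) + U_(I1))%MM = mn a.-1 b.+1 c.
Proof. mnm_tac. Qed.
Lemma mn_sh2 a b c : (mn a b c - U_(I1) + U_(I2))%MM = mn a b.-1 c.+1.
Proof. mnm_tac. Qed.

Lemma mcoeffMXU p (i : 'I_3) k :
  (p * 'X_i)@_k = if (0 < k i)%N then p@_(k - U_(i)) else 0.
Proof.
case: ifP => Hk.
  have Ek : k = (U_(i) + (k - U_(i)))%MM.
    apply/mnmP=> j; rewrite mnmDE mnmBE mnm1E; case: eqP => [<-|] /=; lia.
  by rewrite {1}Ek mcoeffMX.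
apply/eqP; rewrite mcoeff_eq0; apply/negP => Hin.
move: Hin; rewrite (perm_mem (msuppMX _ _)) => /mapP [m' _ Em].
by move: Hk; rewrite Em mnmDE mnm1E eqxx.
Qed.

Definition L p := p^`M(I1) * 'X_I0 + p^`M(I2) * 'X_I1.

Lemma mcoeffL p a b c :
  (L p)@_(mn a b c) =
  (if (0 < a)%N then p@_(mn a.-1 b.+1 c) *+ b.+1 else 0) +
  (if (0 < b)%N then p@_(mn a b.-1 c.+1) *+ c.+1 else 0).
Proof.
rewrite /L mcoeffD !mcoeffMXU mn0 mn1.
case: (posnP a) => [Ha|Ha] /=; case: (posnP b) => [Hb|Hb] //=;
 rewrite ?mcoeff_deriv ?mn_sh1 ?mn_sh2 ?Ha ?Hb //=;
 by rewrite !mnmBE !mnmE ?mnm1E /= ?subn0.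
Qed.

Lemma mulrnS0 (x : R) n : x *+ n.+1 = 0 -> x = 0.
Proof. by move/eqP; rewrite mulrn_eq0 /= => /eqP. Qed.

Lemma kerL0 p : L p = 0 ->
  (forall a b, ~~ odd b -> p@_(mn a b 0) = 0) -> p = 0.
Proof.
move=> Lp Hev.
have E : forall A B C, (if (0 < A)%N then p@_(mn A.-1 B.+1 C) *+ B.+1 else 0) +
  (if (0 < B)%N then p@_(mn A B.-1 C.+1) *+ C.+1 else 0) = 0.
  by move=> A B C; rewrite -mcoeffL Lp mcoeff0.
have S : forall k a c, p@_(mn a k.*2.+1 c) = 0.
  elim=> [|k IH] a c.
    by move: (E a.+1 0%N c) => /=; rewrite addr0; apply: mulrnS0.
  move: (E a.+1 k.*2.+2 c) => /=; rewrite doubleS IH mul0rn addr0.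
  exact: mulrnS0.
have T : forall c a b, p@_(mn a b c) = 0.
  elim=> [|c IH] a b.
    case Ob: (odd b); last by apply: Hev; rewrite Ob.
    by rewrite -[b]odd_double_half Ob S.
  case: a => [|a].
    move: (E 0%N b.+1 c) => /=; rewrite add0r; exact: mulrnS0.
  move: (E a.+1 b.+1 c) => /=; rewrite IH mul0rn add0r; exact: mulrnS0.
apply/mpolyP => m; by rewrite mcoeff0 (mn_eta m) T.
Qed.

Lemma mn_subU0 a b c : (mn a b c - U_(I0))%MM = mn a.-1 b c.
Proof. mnm_tac. Qed.
Lemma mn_subU1 a b c : (mn a b c - U_(I1))%MM = mn a b.-1 c.
Proof. mnm_tac. Qed.
Lemma mn_subU2 a b c : (mn a b c - U_(I2))%MM = mn a b c.-1.
Proof. mnm_tac. Qed.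

Lemma mcoeff_basis a j x y :
  ('X_I0 ^+ a * beta R ^+ j)@_(mn x y 0) =
  if (x == a) && (y == j.*2) then (-1) ^+ j else 0.
Proof.
elim: j x y => [|j IH] x y.
  rewrite expr0 mulr1 mcoeffXn.
  have -> : (U_(I0) *+ a)%MM = mn a 0 0 by mnm_tac.
  case: eqP => [/mnmP H|H] /=.
    move: (H I0) (H I1); rewrite !mnmE /= => <- <-; by rewrite !eqxx.
  case: eqP => [Hx|] //=; case: eqP => [Hy|] //=.
  by exfalso; apply: H; rewrite Hx Hy.
have -> : 'X_I0 ^+ a * beta R ^+ j.+1 =
   ('X_I0 ^+ a * beta R ^+ j * 'X_I2 * 'X_I0) *+ 2
   - 'X_I0 ^+ a * beta R ^+ j * 'X_I1 * 'X_I1.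
  rewrite exprS /beta; ring.
rewrite mcoeffB mcoeffMn !mcoeffMXU !mn0 !mn1 !mn_subU0 !mn_subU1 !mn2 /=.
rewrite if_same mul0rn sub0r.
case: y => [|[|y]] /=; rewrite ?mn1 /= ?oppr0 ?andbF //.
rewrite IH /= doubleS !eqSS.
case: (_ && _); last by rewrite oppr0.
by rewrite exprS mulN1r.
Qed.

Lemma L0 : L 0 = 0.
Proof. by rewrite /L !mderiv0 !mul0r addr0. Qed.
Lemma LD p q : L (p + q) = L p + L q.
Proof. rewrite /L !mderivD; ring. Qed.
Lemma LZ c p : L (c *: p) = c *: L p.
Proof. by rewrite /L !mderivZ scalerDr !scalerAl. Qed.
Lemma LN p : L (- p) = - L p.
Proof. rewrite /L !mderivN; ring. Qed.
Lemma L_sum (I : Type) (r : seq I) (P : pred I) (F : I -> {mpoly R[3]}) :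
  L (\sum_(i <- r | P i) F i) = \sum_(i <- r | P i) L (F i).
Proof. exact: (big_morph L LD L0). Qed.

Lemma mdeg_mn a b c : mdeg (mn a b c) = (a + b + c)%N.
Proof. by rewrite mdegE !big_ord_recr big_ord0 /= !mnmE /= add0n. Qed.


Lemma mderivXU (i j : 'I_3) : ('X_i : {mpoly R[3]})^`M(j) = (i == j)%:R.
Proof.
rewrite mderivX mnm1E; case: eqP => [->|_]; last by rewrite scale0r.
have ->: (U_(j) - U_(j))%MM = 0%MM by apply/mnmP=> k; rewrite mnmBE mnm0E subnn.
by rewrite mpolyX0 scale1r.
Qed.
Lemma LM p q : L (p * q) = L p * q + p * L q.
Proof. rewrite /L !mderivM; ring. Qed.
Lemma LX0 : L 'X_0 = 0.
Proof. rewrite /L !mderivXU /=. ring. Qed.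
Lemma Lbeta : L (beta R) = 0.
Proof.
have d1 : forall i, (1:{mpoly R[3]})^`M(i) = 0 by move=> i; rewrite -mpolyC1 mderivC.
rewrite /L /beta !(mderivB, mderivM, mderivXU, mderivMn, expr2) /= !d1; ring.
Qed.

Lemma L1 : L 1 = 0.
Proof. by rewrite /L -mpolyC1 !mderivC !mul0r addr0. Qed.
Lemma LXn p n : L p = 0 -> L (p ^+ n) = 0.
Proof.
move=> Lp; elim: n => [|n IH]; first by rewrite expr0 L1.
by rewrite exprS LM Lp IH mul0r mulr0 addr0.
Qed.
Lemma Lbasis a j : L ('X_0 ^+ a * beta R ^+ j) = 0.
Proof. by rewrite LM !LXn ?LX0 ?Lbeta // mul0r mulr0 addr0. Qed.
Lemma Lcomp (q : {mpoly R[2]}) : L (q \mPo [tuple ('X_0 : {mpoly R[3]}); beta R]) = 0.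
Proof.
rewrite comp_mpolyE; apply: (big_ind (fun p => L p = 0)).
- exact: L0.
- by move=> x y Hx Hy; rewrite LD Hx Hy addr0.
move=> m _; rewrite LZ.
have -> : L (\prod_(i < 2) tnth [tuple ('X_0 : {mpoly R[3]}); beta R] i ^+ m i) = 0.
  apply: (big_ind (fun p => L p = 0)); first exact: L1.
  - by move=> x y Hx Hy; rewrite LM Hx Hy mul0r mulr0 addr0.
  move=> i _; apply: LXn; case: i => [[|[|[|]]] Hi] //=.
  - by rewrite (tnth_nth 0) /= LX0.
  - by rewrite (tnth_nth 0) /= Lbeta.
by rewrite scaler0.
Qed.

Lemma adE th : ad (Nmat R)^T [ffun i => th * 'X_i] = [ffun i => L th * 'X_i].
Proof.
apply/ffunP=> i; rewrite !ffunE /L.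
rewrite !big_ord_recl !big_ord0 !ffunE !mxE.
have e0 : ord0 = 0 :> 'I_3 by apply/val_inj.
have e1 : lift ord0 ord0 = 1 :> 'I_3 by apply/val_inj.
have e2 : lift ord0 (lift ord0 ord0) = 2 :> 'I_3 by apply/val_inj.
rewrite e2 e1 e0 /= !scale1r !scale0r !add0r !addr0.
have d1 : forall i, (1:{mpoly R[3]})^`M(i) = 0 by move=> k; rewrite -mpolyC1 mderivC.
have [->|[->|->]] : i = 0 \/ i = 1 \/ i = 2.
  by case: i => [[|[|[|]]] Hi] //=; [left|right;left|right;right]; apply/val_inj.
all: rewrite !mderivM !mderivXU ?mulr0 ?addr0 ?mul0r ?add0r.
all: repeat match goal with |- context [if ?b then _ else _] =>
  let e := fresh in first [have e : b = false by [] | have e : b = true by []]; rewrite e end.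
all: rewrite ?eqxx ?scale1r ?scale0r ?add0r ?addr0 /=.
all: ring.
Qed.

Definition cf m p (j : nat) := (-1) ^+ j * p@_(mn (m - j.*2) j.*2 0).
Definition bas m (j : nat) := 'X_I0 ^+ (m - j.*2) * beta R ^+ j.

Lemma decomp m p : p \is m.-homog -> L p = 0 ->
  p = \sum_(j < uphalf m.+1) cf m p j *: bas m j.
Proof.
move=> Hh Lp; apply/eqP; rewrite -subr_eq0; apply/eqP.
apply: kerL0.
  rewrite LD LN L_sum Lp add0r.
  have -> : \sum_(j < uphalf m.+1) L (cf m p j *: bas m j) = 0.
    by apply: big1 => j _; rewrite LZ Lbasis scaler0.
  by rewrite oppr0.
move=> a b Eb.
have {Eb} -> : b = (b./2).*2 by rewrite -{1}[b]odd_double_half (negbTE Eb).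
move: (b./2) => k.
rewrite mcoeffB raddf_sum /=.
under eq_bigr do rewrite mcoeffZ /bas mcoeff_basis.
have [Hab|Hab] := eqVneq (a + k.*2)%N m.
  have Hj : (k < uphalf m.+1)%N by rewrite /= -Hab; lia.
  rewrite (bigD1 (Ordinal Hj)) //= big1.
    rewrite addr0 /cf.
    have -> : (m - k.*2 = a)%N by rewrite -Hab; lia.
    rewrite !eqxx /= mulrAC -exprD addnn.
    by rewrite -signr_odd odd_double expr0 mul1r subrr.
  move=> j Hj'; case: ifP => [/andP [/eqP Ea /eqP Ebj]|_]; last by rewrite mulr0.
  exfalso; move/eqP: Hj'; apply; apply/val_inj => /=.
  by move: Ebj; rewrite -!muln2 => /eqP; rewrite eqn_mul2r /= => /eqP.
rewrite (dhomog_nemf_coeff Hh); last first.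
  by have := mdeg_mn a k.*2 0; rewrite addn0 => E; rewrite [X in X != _]E.
rewrite sub0r; apply/eqP; rewrite oppr_eq0; apply/eqP.
rewrite big1 ?subrr // => j _.
case: ifP => [/andP [/eqP Ea /eqP Ebj]|_]; last by rewrite mulr0.
exfalso; move/eqP: Hab; apply.
have := ltn_ord j; rewrite /= Ea Ebj; lia.
Qed.
End S.
Arguments L {R}.
Arguments decomp {R m p}.

Lemma X0_neq0 (R : realType) : ('X_0 : {mpoly R[3]}) != 0.
Proof.
apply/eqP => H; have := congr1 (mcoeff U_((0%R : 'I_3))) H.
by rewrite /= mcoeff0 mcoeffXU eqxx => /eqP; rewrite oner_eq0.
Qed.

Lemma ker_iff (R : realType) (th : {mpoly R[3]}) :
  ker_adNstar [ffun i => th * 'X_i] <-> L th = 0.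
Proof.
rewrite /ker_adNstar adE; split => [H|->].
  move/ffunP: H => /(_ 0%R); rewrite !ffunE => /eqP.
  by rewrite mulf_eq0 (negbTE (X0_neq0 R)) orbF => /eqP.
by apply/ffunP => i; rewrite !ffunE mul0r.
Qed.

Lemma beta_homog (R : realType) : beta R \is 2.-homog.
Proof.
have hX : forall i : 'I_3, ('X_i : {mpoly R[3]}) \is 1.-homog.
  by move=> i; rewrite dhomogX /=; apply/eqP; exact: mdeg1.
rewrite /beta; apply: rpredB.
  by rewrite mulr_natl; apply: rpredMn; apply: (dhomogM (hX _) (hX _)).
exact: (dhomogMn 2 (hX 1%R)).
Qed.

Lemma bas_homog (R : realType) m (j : nat) : (j.*2 <= m)%N ->
  bas R m j \is m.-homog.
Proof.
move=> Hj; rewrite /bas.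
have h0 : ('X_0 : {mpoly R[3]}) \is 1.-homog by rewrite dhomogX /=; apply/eqP; exact: mdeg1.
have := dhomogM (dhomogMn (m - j.*2) h0) (dhomogMn j (beta_homog R)).
by rewrite mul1n mulnC muln2 subnK.
Qed.

Lemma sum_vf (R : realType) n (c : 'I_n -> R) (F : 'I_n -> {mpoly R[3]}) :
  \sum_(i < n) c i *: ([ffun l => F i * 'X_l] : vf R) =
  [ffun l => (\sum_(i < n) c i *: F i) * 'X_l].
Proof.
apply/ffunP => l; rewrite sum_ffunE ffunE mulr_suml; apply: eq_bigr => i _.
by rewrite ffunE ffunE scalerAl.
Qed.

Theorem lemma9 (R : realType) (d : nat) (hd : (1 <= d)%N) :
  (forall h : vf R,
     (ker_adNstar h /\ U3 d h) <->
     (exists theta : {mpoly R[3]},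
        [/\ theta \is (d.-1).-homog, poly_in_x_beta theta &
            h = [ffun i => theta * 'X_i]])) /\
  (exists b : 'I_(uphalf d) -> vf R,
     (forall c : 'I_(uphalf d) -> R,
        \sum_(i < uphalf d) c i *: b i = 0 -> forall i, c i = 0) /\
     (forall h : vf R,
        (ker_adNstar h /\ U3 d h) <->
        (exists c : 'I_(uphalf d) -> R, h = \sum_(i < uphalf d) c i *: b i))).
Proof.
case: d hd => // m _ /=.
split.
  move=> h; split.
    move=> [Hk [th [Hh Eh]]]; subst h; move/ker_iff: Hk => Lth.
    exists th; split => //.
    exists (\sum_(j < uphalf m.+1) cf R m th j *:
              (('X_0 : {mpoly R[2]}) ^+ (m - j.*2) * 'X_1 ^+ j)).
    rewrite {1}(decomp Hh Lth) raddf_sum /=; apply: eq_bigr => j _.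
    by rewrite linearZ /= rmorphM /= !rmorphXn /= !comp_mpolyXU.
  move=> [th [Hh [q Eq] Eh]]; subst h; split; last by exists th.
  by apply/ker_iff; rewrite Eq Lcomp.
exists (fun i => [ffun l => bas R m i * 'X_l]); split.
  move=> c; rewrite sum_vf => H.
  move/ffunP: H => /(_ 0%R); rewrite !ffunE => /eqP.
  rewrite mulf_eq0 (negbTE (X0_neq0 R)) orbF => /eqP H0 i.
  have := congr1 (mcoeff (mn (m - i.*2) i.*2 0)) H0.
  rewrite mcoeff0 raddf_sum /=.
  under eq_bigr do rewrite mcoeffZ /bas mcoeff_basis.
  rewrite (bigD1 i) //= big1.
    rewrite !eqxx addr0 /= => /eqP; rewrite mulf_eq0 signr_eq0 orbF.
    by move/eqP.
  move=> j Hj; case: ifP => [/andP [_ /eqP Ebj]|_]; last by rewrite mulr0.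
  exfalso; move/eqP: Hj; apply; apply/val_inj => /=.
  by move: Ebj; rewrite -!muln2 => /eqP; rewrite eqn_mul2r /= => /eqP.
move=> h; split.
  move=> [Hk [th [Hh Eh]]]; subst h; move/ker_iff: Hk => Lth.
  exists (cf R m th); rewrite sum_vf.
  by apply/ffunP => l; rewrite !ffunE -(decomp Hh Lth).
move=> [c ->]; rewrite sum_vf; split.
  apply/ker_iff; rewrite L_sum big1 // => i _.
  by rewrite LZ Lbasis scaler0.
exists (\sum_(i < uphalf m.+1) c i *: bas R m i); split => //.
apply: rpred_sum => i _; apply: rpredZ; apply: bas_homog.
have := ltn_ord i; rewrite /=; lia.
Qed.
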